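(* Let ${\bf p}=({\bf p}_1,\dots,{\bf p}_n)$ and ${\bf q}=({\bf q}_1,\dots,{\bf q}_m)$ be configurations in $\mathbb R^d$. Suppose there are subconfigurations ${\bf p}'\subset{\bf p}$ and ${\bf q}'\subset{\bf q}$ such that the combined set of points of $({\bf p}',{\bf q}')$ is in general position in $\mathbb R^d$ and there is no quadric strictly separating ${\bf p}'$ and ${\bf q}'$. Then $(K(n,m),{\bf p},{\bf q})$ is universally rigid, and the affine span of ${\bf p}$ and the affine span of ${\bf q}$ are each all of $\mathbb R^d$.
   Context: $(K(n,m),{\bf p},{\bf q})$ is the framework with bars joining ${\bf p}_i$ to ${\bf q}_j$ for all $i,j$. It is universally rigid if every configuration in any $\mathbb R^D$ with the same bar lengths has all pairwise distances equal to those of the original. A configuration in $\mathbb R^d$ is in general position if every $k+1$ of its points span a $k$-dimensional affine subspace, for $k=1,\dots,d$. For ${\bf x}\in\mathbb R^d$, $\hat{\bf x}$ is ${\bf x}$ with a $1$ appended. Point sets ${\bf a}$, ${\bf b}$ are strictly separated by a quadric if there is a symmetric $(d+1)\times(d+1)$ matrix $A$ with $\hat{\bf b}^tA\hat{\bf b}<0<\hat{\bf a}^tA\hat{\bf a}$ for all ${\bf a}$ in the first set and ${\bf b}$ in the second. *)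

(* Defs.v *)
From HB Require Import structures.
From mathcomp Require Import all_boot all_order all_algebra.
Set Implicit Arguments. Unset Strict Implicit. Unset Printing Implicit Defensive.
Import Order.TTheory GRing.Theory Num.Theory.
Local Open Scope ring_scope.

Definition sqdist (R : rcfType) (d : nat) (x y : 'rV[R]_d) : R :=
  \sum_(i < d) (x 0 i - y 0 i) ^+ 2.

Definition hat (R : rcfType) (d : nat) (x : 'rV[R]_d) : 'rV[R]_(d + 1) :=
  row_mx x (const_mx 1).

Definition join_cfg (R : rcfType) (d n m : nat)
  (p : 'I_n -> 'rV[R]_d) (q : 'I_m -> 'rV[R]_d) : 'I_(n + m) -> 'rV[R]_d :=
  fun k => match split k with inl i => p i | inr j => q j end.

(* dimension of the affine span of the points x_i, i in S
   (= rank of the vectors \hat x_i minus 1) *)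
Definition affdim (R : rcfType) (d N : nat) (x : 'I_N -> 'rV[R]_d)
  (S : {set 'I_N}) : nat :=
  (\rank (\sum_(i in S) <<hat (x i)>>)%MS).-1.

Definition affine_span_full (R : rcfType) (d N : nat) (x : 'I_N -> 'rV[R]_d) : Prop :=
  \rank (\sum_(i < N) <<hat (x i)>>)%MS = d.+1.

Definition general_position (R : rcfType) (d N : nat) (x : 'I_N -> 'rV[R]_d)
  (U : {set 'I_N}) : Prop :=
  forall (k : nat), (1 <= k <= d)%N ->
  forall S : {set 'I_N}, S \subset U -> #|S| = k.+1 -> affdim x S = k.

Definition strictly_separated_by_quadric (R : rcfType) (d n m : nat)
  (a : 'I_n -> 'rV[R]_d) (P : {set 'I_n})
  (b : 'I_m -> 'rV[R]_d) (Q : {set 'I_m}) : Prop :=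
  exists A : 'M[R]_(d + 1), A^T = A /\
    (forall j, j \in Q -> (hat (b j) *m A *m (hat (b j))^T) 0 0 < 0) /\
    (forall i, i \in P -> 0 < (hat (a i) *m A *m (hat (a i))^T) 0 0).

Definition univ_rigid_Knm (R : rcfType) (d n m : nat)
  (p : 'I_n -> 'rV[R]_d) (q : 'I_m -> 'rV[R]_d) : Prop :=
  forall (D : nat) (p2 : 'I_n -> 'rV[R]_D) (q2 : 'I_m -> 'rV[R]_D),
    (forall i j, sqdist (p2 i) (q2 j) = sqdist (p i) (q j)) ->
    forall k l : 'I_(n + m),
      sqdist (join_cfg p2 q2 k) (join_cfg p2 q2 l) = sqdist (join_cfg p q k) (join_cfg p q l).

(* Main.v *)
From HB Require Import structures.
From mathcomp Require Import all_boot all_order all_algebra.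
From mathcomp Require Import ring lra.
Require Import Defs.
Set Implicit Arguments. Unset Strict Implicit. Unset Printing Implicit Defensive.
Import Order.TTheory GRing.Theory Num.Theory.
Local Open Scope ring_scope.

Section Gordan.
Variable R : realFieldType.

Lemma interval_choice (A B : finType) (PA : pred A) (PB : pred B)
  (al : A -> R) (be : B -> R) :
  (forall a b, PA a -> PB b -> al a < be b) ->
  exists t, (forall a, PA a -> al a < t) /\ (forall b, PB b -> t < be b).
Proof.
move=> H.
pose b0 := \big[Order.min/0]_(b | PB b) be b.
pose L := \big[Order.max/(b0 - 1)]_(a | PA a) al a.
pose U := \big[Order.min/(L + 1)]_(b | PB b) be b.
have Lb : forall b, PB b -> L < be b.
  move=> b Pb; apply: bigmax_lt => [|a Pa]; last exact: H.
  by rewrite ltrBlDr (le_lt_trans (bigmin_le_cond _ _ Pb)) // ltrDl.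
have LU : L < U by apply: lt_bigmin => //; rewrite ltrDl.
exists ((L + U) / 2); split.
- move=> a Pa; apply: le_lt_trans (le_bigmax_cond (b0 - 1) _ Pa) _; rewrite -/L.
  rewrite ltr_pdivlMr //; lra.
- move=> b Pb; apply: lt_le_trans (bigmin_le_cond (L + 1) _ Pb); rewrite -/U.
  rewrite ltr_pdivrMr //; lra.
Qed.


Lemma sum_lift_max N (F : 'I_N.+1 -> R) :
  \sum_i F i = \sum_(i < N) F (lift ord_max i) + F ord_max.
Proof.
rewrite big_ord_recr /=; congr (_ + _); apply: eq_bigr => i _.
congr F; apply: val_inj; exact: (esym (lift_max i)).
Qed.

Lemma sum_pair (I J : finType) (F : I * J -> R) :
  \sum_p F p = \sum_a \sum_b F (a, b).
Proof. by rewrite pair_bigA; apply: eq_bigr => -[]. Qed.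

Lemma gordan N (I : finType) (S : pred I) (v : I -> 'I_N -> R) :
  (exists x : 'I_N -> R, forall k, S k -> 0 < \sum_i v k i * x i) \/
  (exists lam : I -> R, [/\ forall k, 0 <= lam k, forall k, ~~ S k -> lam k = 0,
     exists k, lam k != 0 & forall i, \sum_k lam k * v k i = 0]).
Proof.
elim: N I S v => [|N IH] I S v.
  case: (pickP S) => [k Sk|nS].
    right; exists (fun j => (j == k)%:R); split.
    - by move=> j; rewrite ler0n.
    - by move=> j; case: eqP => // -> ; rewrite Sk.
    - by exists k; rewrite eqxx oner_neq0.
    - by case.
  by left; exists (fun _ => 0) => k; rewrite nS.
pose c k := v k ord_max.
pose u k i := v k (lift ord_max i).
pose S' (j : (I + I * I)%type) := match j with
  | inl k => S k && (c k == 0)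
  | inr ab => [&& S ab.1, S ab.2, 0 < c ab.1 & c ab.2 < 0] end.
pose v' (j : (I + I * I)%type) i := match j with
  | inl k => u k i
  | inr ab => - c ab.2 * u ab.1 i + c ab.1 * u ab.2 i end.
case: (IH _ S' v') => [[x' Hx']|[rho [r0 rS [j0 rj0] req]]].
  pose U k := \sum_i u k i * x' i.
  have HAB : forall a b, S a && (0 < c a) -> S b && (c b < 0) ->
      - U a / c a < U b / (- c b).
    move=> a b /andP[Sa ca] /andP[Sb cb].
    have := Hx' (inr (a, b)); rewrite /= Sa Sb ca cb => /(_ isT).
    under eq_bigr => i _ do rewrite mulrDl -!mulrA.
    rewrite big_split /= -!mulr_sumr -/(U a) -/(U b) => H.
    have k0 : 0 < c a * - c b by rewrite mulr_gt0 // oppr_gt0.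
    rewrite -(ltr_pM2r k0).
    have -> : - U a / c a * (c a * - c b) = - U a * - c b.
      by field; rewrite gt_eqF.
    have -> : U b / - c b * (c a * - c b) = U b * c a.
      by field; rewrite ?oppr_eq0 ?lt_eqF // ?gt_eqF.
    by rewrite mulrNN; move: H; rewrite (mulrC (c a)); lra.
  have [t [Ht1 Ht2]] := @interval_choice I I (fun a => S a && (0 < c a))
     (fun b => S b && (c b < 0)) (fun a => - U a / c a) (fun b => U b / (- c b)) HAB.
  left; exists (fun i => if unlift ord_max i is Some j then x' j else t).
  move=> k Sk; rewrite sum_lift_max unlift_none.
  under eq_bigr => i _ do rewrite liftK.
  rewrite -/(u k) -/(U k) -/(c k).
  case: (ltgtP (c k) 0) => ck.
  - have := Ht2 k; rewrite Sk ck => /(_ isT).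
    rewrite ltr_pdivlMr ?oppr_gt0 //; nra.
  - have := Ht1 k; rewrite Sk ck => /(_ isT).
    rewrite ltr_pdivrMr //; nra.
  - have := Hx' (inl k); rewrite /= Sk ck eqxx => /(_ isT).
    by rewrite mul0r addr0.
have rS' : forall j, rho j != 0 -> S' j.
  by move=> j; apply: contraR => /rS ->.
have t1 : forall a b, 0 <= rho (inr (a, b)) * - c b.
  move=> a b; case: (boolP (S' (inr (a, b)))) => [/and4P[_ _ _ cb]|nS].
    by rewrite mulr_ge0 // oppr_ge0 ltW.
  by rewrite rS // mul0r.
have t2 : forall a b, 0 <= rho (inr (a, b)) * c a.
  move=> a b; case: (boolP (S' (inr (a, b)))) => [/and4P[_ _ ca _]|nS].
    by rewrite mulr_ge0 // ltW.
  by rewrite rS // mul0r.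
pose lam k := rho (inl k) + \sum_b rho (inr (k, b)) * - c b
   + \sum_a rho (inr (a, k)) * c a.
have lam0 : forall k, 0 <= lam k.
  by move=> k; rewrite !addr_ge0 ?sumr_ge0.
right; exists lam; split => //.
- move=> k nSk; rewrite /lam rS /=; last by rewrite (negbTE nSk).
  rewrite !big1 ?addr0 // => [a _|b _]; rewrite rS ?mul0r //=.
    by rewrite (negbTE nSk) andbF.
  by rewrite (negbTE nSk).
- case: j0 rj0 => [k|[a b]] rk.
    exists k; rewrite lt0r_neq0 // /lam -addrA ltr_wpDr ?addr_ge0 ?sumr_ge0 //.
    by rewrite lt_def rk r0.
  exists a; rewrite lt0r_neq0 // /lam -addrA ltr_wpDl //.
  rewrite ltr_wpDr ?sumr_ge0 // (bigD1 b) //= ltr_wpDr ?sumr_ge0 //.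
  have /and4P[_ _ _ cb] := rS' _ rk.
  by rewrite mulr_gt0 ?oppr_gt0 // lt_def rk r0.
- move=> i; case: (unliftP ord_max i) => [j ->|->].
    have := req j; rewrite big_sumType /= sum_pair /=.
    under [X in _ + X = _ -> _]eq_bigr => a _ do
      (under eq_bigr => b _ do rewrite mulrDr !mulrA; rewrite big_split /=).
    rewrite big_split /= [X in _ + (_ + X)](exchange_big) /= => E; apply: etrans E.
    rewrite /lam; under eq_bigr => k _ do rewrite !mulrDl !mulr_suml.
    rewrite !big_split /= -addrA; congr (_ + (_ + _)).
  rewrite /lam; under eq_bigr => k _ do rewrite !mulrDl !mulr_suml.
  rewrite !big_split /= big1 => [|k _]; last first.
    case: (boolP (rho (inl k) == 0)) => [/eqP -> |/rS' /andP[_ /eqP ck]].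
      by rewrite mul0r.
    by rewrite /c in ck; rewrite ck mulr0.
  rewrite add0r exchange_big /= -big_split /= big1 // => k _.
  rewrite -big_split big1 //= => b _.
  rewrite /c; ring.
Qed.

End Gordan.

Section Basic.
Variable R : rcfType.

Definition dotm k (u v : 'rV[R]_k) : R := \tr (u^T *m v).

Lemma dotmE k (u v : 'rV[R]_k) : dotm u v = \sum_i u 0 i * v 0 i.
Proof.
rewrite /dotm /mxtrace; apply: eq_bigr => i _.
by rewrite mxE big_ord1 mxE.
Qed.

Lemma sqdistE k (x y : 'rV[R]_k) : sqdist x y = dotm (x - y) (x - y).
Proof.
rewrite /sqdist dotmE; apply: eq_bigr => i _; by rewrite !mxE expr2.
Qed.

Lemma dotmC k (u v : 'rV[R]_k) : dotm u v = dotm v u.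
Proof. by rewrite /dotm -mxtrace_tr trmx_mul trmxK. Qed.

Lemma dotmDl k (u1 u2 v : 'rV[R]_k) : dotm (u1 + u2) v = dotm u1 v + dotm u2 v.
Proof. by rewrite /dotm linearD /= mulmxDl mxtraceD. Qed.

Lemma dotmNl k (u v : 'rV[R]_k) : dotm (- u) v = - dotm u v.
Proof. by rewrite /dotm linearN /= mulNmx linearN. Qed.

Lemma dotmBl k (u1 u2 v : 'rV[R]_k) : dotm (u1 - u2) v = dotm u1 v - dotm u2 v.
Proof. by rewrite dotmDl dotmNl. Qed.

Lemma dotmBr k (u v1 v2 : 'rV[R]_k) : dotm u (v1 - v2) = dotm u v1 - dotm u v2.
Proof. by rewrite dotmC dotmBl !(dotmC u). Qed.

Lemma dotmDr k (u v1 v2 : 'rV[R]_k) : dotm u (v1 + v2) = dotm u v1 + dotm u v2.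
Proof. by rewrite dotmC dotmDl !(dotmC u). Qed.

Lemma dotm_ge0 k (u : 'rV[R]_k) : 0 <= dotm u u.
Proof. by rewrite dotmE sumr_ge0 // => i _; rewrite -expr2 sqr_ge0. Qed.

Lemma dotm_eq0 k (u : 'rV[R]_k) : dotm u u = 0 -> u = 0.
Proof.
rewrite dotmE => /eqP; rewrite psumr_eq0 => [/allP H|i _]; last first.
  by rewrite -expr2 sqr_ge0.
apply/rowP => i; rewrite mxE; apply/eqP.
by have := H i (mem_index_enum _); rewrite -expr2 sqrf_eq0.
Qed.

Lemma sqdist_ge0 k (x y : 'rV[R]_k) : 0 <= sqdist x y.
Proof. by rewrite sqdistE dotm_ge0. Qed.

Lemma sqdist_eq0 k (x y : 'rV[R]_k) : sqdist x y = 0 -> x = y.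
Proof. by rewrite sqdistE => /dotm_eq0 /eqP; rewrite subr_eq0 => /eqP. Qed.

Lemma sqdist_expand k (x y : 'rV[R]_k) :
  sqdist x y = dotm x x - 2 * dotm x y + dotm y y.
Proof. rewrite sqdistE dotmBl !dotmBr (dotmC y x); ring. Qed.

Lemma dotm_mulr k l (u : 'rV[R]_k) (v : 'rV[R]_l) (A : 'M[R]_(l, k)) :
  dotm u (v *m A) = \tr (A *m u^T *m v).
Proof. by rewrite /dotm mulmxA mxtrace_mulC mulmxA. Qed.

End Basic.

Section Energy.
Variable R : rcfType.
Variables d n m : nat.
Variables (p : 'I_n -> 'rV[R]_d) (q : 'I_m -> 'rV[R]_d).
Variables (lam : 'I_n -> R) (mu : 'I_m -> R).
Let h i := hat (p i).
Let g j := hat (q j).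
Let M := \sum_i lam i *: ((h i)^T *m h i).
Hypothesis Mq : M = \sum_j mu j *: ((g j)^T *m g j).
Hypothesis Munit : M \in unitmx.
Let Mi := invmx M.

Lemma tr_sum (I : finType) k (a : I -> R) (B : I -> 'M[R]_k) :
  \sum_i a i * \tr (B i) = \tr (\sum_i a i *: B i).
Proof. by rewrite linear_sum; apply: eq_bigr => i _; rewrite linearZ. Qed.

Lemma MT : M^T = M.
Proof.
rewrite /M linear_sum; apply: eq_bigr => i _.
by rewrite linearZ /= trmx_mul trmxK.
Qed.

Lemma MiT : Mi^T = Mi.
Proof. by rewrite /Mi trmx_inv MT. Qed.

Definition evec : 'cV[R]_(d + 1) := col_mx 0 1.

Lemma hat_evec (x : 'rV[R]_d) : hat x *m evec = 1.
Proof.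
rewrite /hat /evec mul_row_col mulmx0 add0r mulmx1.
by apply/matrixP => i j; rewrite !ord1 !mxE.
Qed.

Lemma sum_gT : \sum_j mu j *: (g j)^T = M *m evec.
Proof.
rewrite Mq mulmx_suml; apply: eq_bigr => j _.
by rewrite -scalemxAl -mulmxA hat_evec mulmx1.
Qed.

Lemma sum_h : \sum_i lam i *: h i = evec^T *m M.
Proof.
rewrite /M mulmx_sumr; apply: eq_bigr => i _.
by rewrite -scalemxAr mulmxA -trmx_mul hat_evec trmx1 mul1mx.
Qed.

Definition cc i j := (h i *m Mi *m (g j)^T) 0 0.

Lemma F1 i : \sum_j lam i * mu j * cc i j = lam i.
Proof.
have -> : \sum_j lam i * mu j * cc i j = lam i * (h i *m Mi *m \sum_j mu j *: (g j)^T) 0 0.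
  rewrite mulmx_sumr summxE mulr_sumr; apply: eq_bigr => j _.
  by rewrite -scalemxAr mxE mulrA.
by rewrite sum_gT mulmxA -(mulmxA (h i)) mulVmx // mulmx1 hat_evec mxE mulr1.
Qed.

Lemma F2 j : \sum_i lam i * mu j * cc i j = mu j.
Proof.
have -> : \sum_i lam i * mu j * cc i j = mu j * ((\sum_i lam i *: h i) *m Mi *m (g j)^T) 0 0.
  rewrite !mulmx_suml summxE mulr_sumr; apply: eq_bigr => i _.
  by rewrite -!scalemxAl mxE; rewrite /cc; ring.
rewrite sum_h -(mulmxA _ M) mulmxV // mulmx1 -trmx_mul hat_evec.
by rewrite trmx1 mxE mulr1.
Qed.

Section Energy2.
Variable D : nat.
Variables (x : 'I_n -> 'rV[R]_D) (y : 'I_m -> 'rV[R]_D).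
Definition Yt := \sum_j mu j *: ((y j)^T *m g j).
Definition Xt := \sum_i lam i *: ((x i)^T *m h i).
Definition KK := Mi *m Yt^T.

Lemma cross : \tr (Mi *m Yt^T *m Xt) =
  \sum_i \sum_j lam i * mu j * cc i j * dotm (x i) (y j).
Proof.
rewrite /Yt /Xt [(\sum_j _)^T]linear_sum /= mulmx_sumr linear_sum /=.
apply: eq_bigr => i _; rewrite mulmx_sumr mulmx_suml linear_sum /=; apply: eq_bigr => j _.
rewrite [(_ *: _)^T]linearZ /= trmx_mul trmxK -!scalemxAr -?scalemxAl -?scalemxAr -?scalemxAl -?scalemxAr !mxtraceZ.
rewrite !mulmxA mxtrace_mulC !mulmxA.
rewrite -(mulmxA (h i *m Mi *m (g j)^T)) (mx11_scalar (h i *m Mi *m (g j)^T)) -/(cc i j).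
rewrite mul_scalar_mx mxtraceZ mxtrace_mulC -/(dotm (x i) (y j)).
ring.
Qed.

Lemma sum3 (I : finType) (a u v w : I -> R) :
  \sum_i a i * (u i - 2 * v i + w i) =
  \sum_i a i * u i - 2 * \sum_i a i * v i + \sum_i a i * w i.
Proof.
rewrite mulr_sumr -sumrB -big_split /=; apply: eq_bigr => i _; ring.
Qed.

Lemma Lh (A : 'M[R]_(d + 1, D)) :
  \sum_i lam i * dotm (h i *m A) (h i *m A) = \tr (A^T *m M *m A).
Proof.
rewrite /M mulmx_sumr mulmx_suml linear_sum; apply: eq_bigr => i _.
by rewrite /dotm trmx_mul -scalemxAr -scalemxAl linearZ /= !mulmxA.
Qed.

Lemma Lg (A : 'M[R]_(d + 1, D)) :
  \sum_j mu j * dotm (g j *m A) (g j *m A) = \tr (A^T *m M *m A).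
Proof.
rewrite Mq mulmx_sumr mulmx_suml linear_sum; apply: eq_bigr => i _.
by rewrite /dotm trmx_mul -scalemxAr -scalemxAl linearZ /= !mulmxA.
Qed.

Lemma Lhz (A : 'M[R]_(d + 1, D)) (z : 'I_n -> 'rV[R]_D) :
  \sum_i lam i * dotm (z i) (h i *m A) = \tr (A *m \sum_i lam i *: ((z i)^T *m h i)).
Proof.
rewrite mulmx_sumr linear_sum; apply: eq_bigr => i _.
by rewrite dotm_mulr -scalemxAr linearZ /= mulmxA.
Qed.

Lemma Lgz (A : 'M[R]_(d + 1, D)) (z : 'I_m -> 'rV[R]_D) :
  \sum_j mu j * dotm (z j) (g j *m A) = \tr (A *m \sum_j mu j *: ((z j)^T *m g j)).
Proof.
rewrite mulmx_sumr linear_sum; apply: eq_bigr => i _.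
by rewrite dotm_mulr -scalemxAr linearZ /= mulmxA.
Qed.

Lemma energy :
  \sum_i lam i * sqdist (x i) (h i *m KK) + \sum_j mu j * sqdist (y j) (g j *m KK)
  = \sum_i \sum_j lam i * mu j * cc i j * sqdist (x i) (y j).
Proof.
under eq_bigr => i _ do rewrite sqdist_expand.
under [X in _ + X = _]eq_bigr => j _ do rewrite sqdist_expand.
rewrite !sum3 Lh Lg Lhz Lgz -/Xt -/Yt.
have E1 : \tr (KK^T *m M *m KK) = \tr (Yt *m Mi *m Yt^T).
  by rewrite /KK trmx_mul trmxK MiT !mulmxA -(mulmxA _ Mi M) mulVmx // mulmx1.
have E2 : \tr (KK *m Yt) = \tr (Yt *m Mi *m Yt^T).
  by rewrite /KK mxtrace_mulC mulmxA.
have E3 : \tr (KK *m Xt) = \tr (Mi *m Yt^T *m Xt) by [].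
rewrite E1 E2 E3 cross.
under [RHS]eq_bigr => i _ do under eq_bigr => j _ do rewrite sqdist_expand.
have H1 : \sum_i \sum_j lam i * mu j * cc i j * (dotm (x i) (x i) - 2 * dotm (x i) (y j) + dotm (y j) (y j))
   = \sum_i lam i * dotm (x i) (x i) - 2 * (\sum_i \sum_j lam i * mu j * cc i j * dotm (x i) (y j))
     + \sum_j mu j * dotm (y j) (y j).
  have E4 : \sum_j mu j * dotm (y j) (y j) =
      \sum_i \sum_j lam i * mu j * cc i j * dotm (y j) (y j).
    rewrite exchange_big; apply: eq_bigr => j _.
    by rewrite -{1}(F2 j) mulr_suml.
  have E5 : \sum_i lam i * dotm (x i) (x i) =
      \sum_i \sum_j lam i * mu j * cc i j * dotm (x i) (x i).
    by apply: eq_bigr => i _; rewrite -{1}(F1 i) mulr_suml.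
  rewrite E4 E5 mulr_sumr -sumrB -big_split /=; apply: eq_bigr => i _.
  rewrite mulr_sumr -sumrB -big_split /=; apply: eq_bigr => j _; ring.
rewrite H1; ring.
Qed.

End Energy2.

Definition E0 : 'M[R]_(d + 1, d) := col_mx 1%:M 0.

Lemma hatE0 (z : 'rV[R]_d) : hat z *m E0 = z.
Proof.
rewrite /hat /E0 mul_row_col mulmx1 mulmx0 addr0 //.
Qed.

Lemma sum_nonneg_eq0 (I : finType) (a b : I -> R) :
  (forall i, 0 <= a i) -> (forall i, 0 <= b i) -> \sum_i a i * b i = 0 ->
  forall i, 0 < a i -> b i = 0.
Proof.
move=> a0 b0 /eqP; rewrite psumr_eq0 => [/allP H i ai|i _]; last by rewrite mulr_ge0.
have /eqP := H i (mem_index_enum _).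
by move/eqP; rewrite mulf_eq0 (gt_eqF ai) => /eqP.
Qed.

Hypothesis lam0 : forall i, 0 <= lam i.
Hypothesis mu0 : forall j, 0 <= mu j.

Lemma affine_support D (p2 : 'I_n -> 'rV[R]_D) (q2 : 'I_m -> 'rV[R]_D) :
  (forall i j, sqdist (p2 i) (q2 j) = sqdist (p i) (q j)) ->
  exists K : 'M[R]_(d + 1, D),
    (forall i, 0 < lam i -> p2 i = h i *m K) /\ (forall j, 0 < mu j -> q2 j = g j *m K).
Proof.
move=> Hd.
have K0 : KK q = E0.
  rewrite /KK /Yt linear_sum /=.
  have -> : \sum_j (mu j *: ((q j)^T *m g j))^T = M *m E0.
    rewrite Mq mulmx_suml; apply: eq_bigr => j _.
    by rewrite linearZ /= trmx_mul trmxK -scalemxAl -mulmxA -[q j in LHS]hatE0.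
  by rewrite mulmxA mulVmx // mul1mx.
have Z0 := energy p q; rewrite K0 in Z0.
rewrite (eq_bigr (fun _ => 0)) in Z0; last by move=> i _; rewrite hatE0 sqdistE subrr dotmE big1 ?mulr0 // => k _; rewrite mxE mul0r.
rewrite [X in _ + X = _](eq_bigr (fun _ => 0)) in Z0; last by move=> i _; rewrite hatE0 sqdistE subrr dotmE big1 ?mulr0 // => k _; rewrite mxE mul0r.
have Z := energy p2 q2.
have Z1 : \sum_i \sum_j lam i * mu j * cc i j * sqdist (p2 i) (q2 j) = 0.
  under eq_bigr => i _ do under eq_bigr => j _ do rewrite Hd.
  by rewrite -Z0 !big1_eq addr0.
rewrite Z1 in Z.
exists (KK q2).
have A1 : 0 <= \sum_i lam i * sqdist (p2 i) (h i *m KK q2) by rewrite sumr_ge0 // => i _; rewrite mulr_ge0 ?sqdist_ge0.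
have A2 : 0 <= \sum_j mu j * sqdist (q2 j) (g j *m KK q2) by rewrite sumr_ge0 // => i _; rewrite mulr_ge0 ?sqdist_ge0.
split => [i li|j lj]; apply: sqdist_eq0.
  apply: (sum_nonneg_eq0 (b := fun i => sqdist (p2 i) (h i *m KK q2)) lam0) => // [k|]; [exact: sqdist_ge0|lra].
apply: (sum_nonneg_eq0 (b := fun j => sqdist (q2 j) (g j *m KK q2)) mu0) => // [k|]; [exact: sqdist_ge0|lra].
Qed.

End Energy.

Section Rigid.
Variable R : rcfType.
Variable d : nat.

Lemma const11 : const_mx 1 = 1%:M :> 'M[R]_1.
Proof. by apply/matrixP => i j; rewrite !ord1 !mxE. Qed.

Lemma hat_col D (z : 'rV[R]_d) (a : 'M[R]_(d, D)) (b : 'M[R]_(1, D)) :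
  hat z *m col_mx a b = z *m a + b.
Proof. by rewrite /hat mul_row_col const11 mul1mx. Qed.

Lemma hatK D (z : 'rV[R]_d) (K : 'M[R]_(d + 1, D)) :
  hat z *m K = z *m usubmx K + dsubmx K.
Proof. by rewrite -{1}(vsubmxK K) hat_col. Qed.

Lemma dot_entry k (u v : 'rV[R]_k) : (u *m v^T) 0 0 = dotm u v.
Proof. by rewrite dotmE mxE; apply: eq_bigr => i _; rewrite mxE. Qed.

Lemma dotm_L D (v : 'rV[R]_d) (L : 'M[R]_(d, D)) :
  dotm (v *m L) (v *m L) = (v *m (L *m L^T) *m v^T) 0 0.
Proof.
rewrite dotm_mulr trmx_mul !mulmxA mxtrace_mulC !mulmxA /mxtrace big_ord1.
by [].
Qed.

Lemma dotm_Lr D (v : 'rV[R]_d) (L : 'M[R]_(d, D)) (r : 'rV[R]_D) :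
  r *m L^T = 0 -> dotm (v *m L) r = 0.
Proof.
move=> rL; rewrite dotmC dotm_mulr.
have -> : L *m r^T = 0 by rewrite -(trmxK L) -trmx_mul rL linear0.
by rewrite mul0mx linear0.
Qed.

Definition quad (v : 'rV[R]_d) (C : 'M[R]_d) := (v *m C *m v^T) 0 0.

Lemma eD k l (A B : 'M[R]_(k, l)) i j : (A + B) i j = A i j + B i j.
Proof. by rewrite mxE. Qed.
Lemma eN k l (A : 'M[R]_(k, l)) i j : (- A) i j = - A i j.
Proof. by rewrite mxE. Qed.
Lemma eZ k l a (A : 'M[R]_(k, l)) i j : (a *: A) i j = a * A i j.
Proof. by rewrite mxE. Qed.

Lemma quadB (u v : 'rV[R]_d) (C : 'M[R]_d) : C^T = C ->
  quad (u - v) C = quad u C - 2 * (u *m C *m v^T) 0 0 + quad v C.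
Proof.
move=> CT; rewrite /quad linearB /= mulmxBl !mulmxBr !mulmxBl !eD !eN.
have -> : (v *m C *m u^T) 0 0 = (u *m C *m v^T) 0 0.
  have -> : (v *m C *m u^T) 0 0 = ((v *m C *m u^T)^T) 0 0 by rewrite [RHS]mxE.
  by rewrite !trmx_mul trmxK CT mulmxA.
rewrite !eD !eN; ring.
Qed.

Definition spanning l (a : 'I_l -> 'rV[R]_d) (S : pred 'I_l) :=
  forall w : 'cV[R]_(d + 1), (forall j, S j -> hat (a j) *m w = 0) -> w = 0.

Lemma m11P (A B : 'M[R]_1) : A 0 0 = B 0 0 -> A = B.
Proof. by move=> H; apply/matrixP => i j; rewrite !ord1. Qed.

Lemma col_mx_eq0P k l (A : 'M[R]_(k, l)) (B : 'M[R]_(1, l)) :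
  col_mx A B = 0 -> A = 0 /\ B = 0.
Proof. by move/eqP; rewrite col_mx_eq0 => /andP[/eqP -> /eqP ->]. Qed.

Lemma scale2_eq0 k l (A : 'M[R]_(k, l)) : 2 *: A = 0 -> A = 0.
Proof. by move/eqP; rewrite scaler_eq0 pnatr_eq0 /= => /eqP. Qed.

Lemma ckill k l (a : 'I_k -> 'rV[R]_d) (Sa : pred 'I_k) (b : 'I_l -> 'rV[R]_d)
  (S : pred 'I_l) (C : 'M[R]_d) :
  C^T = C -> spanning a Sa ->
  (forall i j, Sa i -> S j -> quad (a i - b j) C = 0) ->
  forall j1 j2, S j1 -> S j2 -> C *m (b j1 - b j2)^T = 0.
Proof.
move=> CT sp H j1 j2 S1 S2.
pose w := col_mx (2 *: (C *m (b j1 - b j2)^T)) ((quad (b j2) C - quad (b j1) C)%:M).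
have /col_mx_eq0P [/scale2_eq0 -> _] // : w = 0.
apply: sp => i Si; rewrite hat_col; apply: m11P.
have := H i j1 Si S1; have := H i j2 Si S2; rewrite !quadB // => E1 E2.
rewrite -scalemxAr linearB /= !mulmxBr !mulmxA eD eZ eD eN [X in _ + X = _]mxE eqxx mulr1n [RHS]mxE.
move: E1 E2; rewrite /quad; lra.
Qed.

Lemma czero l (b : 'I_l -> 'rV[R]_d) (S : pred 'I_l) (C : 'M[R]_d) :
  C^T = C -> spanning b S -> (exists j0, S j0) ->
  (forall j1 j2, S j1 -> S j2 -> C *m (b j1 - b j2)^T = 0) -> C = 0.
Proof.
move=> CT sp [j0 Sj0] H.
suff Hc : forall c, col c C = 0.
  by apply/matrixP => r c; have := congr1 (fun M : 'cV[R]_d => M r 0) (Hc c); rewrite !mxE.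
move=> c.
pose w := col_mx (col c C) (- (b j0 *m col c C)).
have /col_mx_eq0P [] // : w = 0.
apply: sp => j Sj; rewrite hat_col -mulmxBl colE mulmxA.
have -> : (b j - b j0) *m C = 0.
  by rewrite -(trmxK (_ *m C)) trmx_mul CT H // linear0.
by rewrite mul0mx.
Qed.

Lemma extend D l (a : 'I_l -> 'rV[R]_d) (S : pred 'I_l) (L : 'M[R]_(d, D))
  (t : 'rV[R]_D) (a2 : 'I_l -> 'rV[R]_D) (z : 'rV[R]_d) (z2 : 'rV[R]_D) :
  L *m L^T = 1%:M -> spanning a S -> (forall j, S j -> a2 j = a j *m L + t) ->
  (forall j, S j -> sqdist z2 (a2 j) = sqdist z (a j)) -> z2 = z *m L + t.
Proof.
move=> LL sp Ha Hd.
pose u := z2 - t; pose w := u *m L^T; pose r := u - w *m L.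
have rL : r *m L^T = 0 by rewrite /r mulmxBl -mulmxA LL mulmx1 /w subrr.
have rE : r = u - w *m L by [].
clearbody r.
have E : forall v, dotm (v *m L + r) (v *m L + r) = dotm v v + dotm r r.
  move=> v; rewrite dotmDl !dotmDr (dotm_Lr v rL) (dotmC r) (dotm_Lr v rL).
  by rewrite dotm_L LL mulmx1 dot_entry addr0 add0r.
have key : forall j, S j -> dotm (w - a j) (w - a j) + dotm r r = dotm (z - a j) (z - a j).
  move=> j Sj; rewrite -sqdistE -Hd // sqdistE Ha //.
  have -> : z2 - (a j *m L + t) = (w - a j) *m L + r.
    apply/rowP => c; rewrite rE /u mulmxBl !eD !eN eD; ring.
  by rewrite E.
pose w' := col_mx (2 *: (z - w)^T) ((dotm w w - dotm z z + dotm r r)%:M).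
have /col_mx_eq0P [H1 H2] : w' = 0.
  apply: sp => j Sj; rewrite hat_col; apply: m11P.
  have := key j Sj; rewrite !dotmBl !dotmBr -scalemxAr eD eZ dot_entry !mxE eqxx mulr1n.
  rewrite dotmBr (dotmC w (a j)) (dotmC z (a j)); lra.
have wz : w = z by move/scale2_eq0/eqP: H1; rewrite trmx_eq0 subr_eq0 => /eqP ->.
have r0 : r = 0.
  apply: dotm_eq0; have := congr1 (fun M : 'M[R]_1 => M 0 0) H2; rewrite !mxE eqxx mulr1n wz.
  lra.
by move: r0; rewrite rE /u wz => /eqP; rewrite subr_eq0 subr_eq => /eqP.
Qed.

End Rigid.

Section Final.
Variable R : rcfType.
Variables d n m : nat.
Variables (p : 'I_n -> 'rV[R]_d) (q : 'I_m -> 'rV[R]_d).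
Variables (lam : 'I_n -> R) (mu : 'I_m -> R).
Hypothesis lam0 : forall i, 0 <= lam i.
Hypothesis mu0 : forall j, 0 <= mu j.
Hypothesis Mq : \sum_i lam i *: ((hat (p i))^T *m hat (p i)) =
  \sum_j mu j *: ((hat (q j))^T *m hat (q j)).
Hypothesis Munit : \sum_i lam i *: ((hat (p i))^T *m hat (p i)) \in unitmx.
Hypothesis spanP : spanning p (fun i => 0 < lam i).
Hypothesis spanQ : spanning q (fun j => 0 < mu j).
Hypothesis exQ : exists j, 0 < mu j.

Lemma sqdistC k (x y : 'rV[R]_k) : sqdist x y = sqdist y x.
Proof. by rewrite !sqdistE -opprB dotmNl dotmC dotmNl opprK. Qed.

Lemma sqdist_aff D (L : 'M[R]_(d, D)) (t : 'rV[R]_D) (x y : 'rV[R]_d) :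
  sqdist (x *m L + t) (y *m L + t) = quad (x - y) (L *m L^T).
Proof.
rewrite sqdistE.
have -> : x *m L + t - (y *m L + t) = (x - y) *m L.
  by apply/rowP => c; rewrite mulmxBl !(eD, eN); ring.
by rewrite dotm_L.
Qed.

Lemma quadBm (v : 'rV[R]_d) (A B : 'M[R]_d) : quad v (A - B) = quad v A - quad v B.
Proof. by rewrite /quad mulmxBr mulmxBl eD eN. Qed.

Lemma quad1 (v : 'rV[R]_d) : quad v 1%:M = sqdist v 0.
Proof. by rewrite /quad mulmx1 dot_entry sqdistE subr0. Qed.

Lemma ur_final : univ_rigid_Knm p q.
Proof.
move=> D p2 q2 Hd.
have [K [HP HQ]] := affine_support Mq Munit lam0 mu0 Hd.
set L := usubmx K; set t := dsubmx K.
have HP' : forall i, 0 < lam i -> p2 i = p i *m L + t by move=> i /HP ->; rewrite hatK.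
have HQ' : forall j, 0 < mu j -> q2 j = q j *m L + t by move=> j /HQ ->; rewrite hatK.
pose C := L *m L^T - 1%:M.
have CT : C^T = C by rewrite /C linearB /= trmx_mul trmxK trmx1.
have Hq : forall i j, 0 < lam i -> 0 < mu j -> quad (p i - q j) C = 0.
  move=> i j li mj; rewrite quadBm -(sqdist_aff L t) -HP' // -HQ' // Hd quad1 sqdistE.
  by rewrite sqdistE subr0 subrr.
have C0 : C = 0.
  apply: (czero CT spanQ exQ) => j1 j2 S1 S2.
  exact: (ckill CT spanP Hq).
have LL : L *m L^T = 1%:M by apply/eqP; rewrite -subr_eq0 -/C C0.
have AQ : forall j, q2 j = q j *m L + t.
  move=> j; apply: (extend LL spanP HP') => i li; by rewrite sqdistC Hd sqdistC.
have AP : forall i, p2 i = p i *m L + t.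
  move=> i; apply: (extend LL spanQ (fun j _ => AQ j)) => j mj; by rewrite Hd.
have AJ : forall k, join_cfg p2 q2 k = join_cfg p q k *m L + t.
  by move=> k; rewrite /join_cfg; case: (split k).
move=> k l; rewrite !AJ sqdist_aff LL quad1 sqdistE subr0 sqdistE //.
Qed.

End Final.

Section Span.
Variable R : rcfType.
Variable d : nat.

Lemma sep_fun k l (V : 'M[R]_(k, d + 1)) (B : 'M[R]_(l, d + 1)) :
  ~~ (B <= V)%MS -> exists w : 'cV[R]_(d + 1), V *m w = 0 /\ B *m w != 0.
Proof.
rewrite submxE => nz.
have [c Hc] : exists c, col c (B *m cokermx V) != 0.
  case: (pickP (fun c => col c (B *m cokermx V) != 0)) => [c Hc|H]; first by exists c.
  move/negP: nz; case; apply/eqP/matrixP => r c.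
  by have /negPn/eqP/matrixP/(_ r 0) := H c; rewrite !mxE.
exists (col c (cokermx V)); split.
  by rewrite colE mulmxA mulmx_coker mul0mx.
by rewrite colE mulmxA -colE.
Qed.

Lemma sub_ker k l (V : 'M[R]_(k, d + 1)) (x : 'M[R]_(l, d + 1)) (w : 'cV[R]_(d + 1)) :
  (x <= V)%MS -> V *m w = 0 -> x *m w = 0.
Proof. by move=> /submxP [D ->] Vw; rewrite -mulmxA Vw mulmx0. Qed.

Lemma span_full l (a : 'I_l -> 'rV[R]_(d + 1)) (S : pred 'I_l) :
  (forall w : 'cV[R]_(d + 1), (forall j, S j -> a j *m w = 0) -> w = 0) ->
  \rank (\sum_(j | S j) <<a j>>)%MS = (d + 1)%N.
Proof.
move=> sp; apply/eqP; rewrite -/(row_full _) -sub1mx; apply/negPn/negP => nf.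
have [w [Vw nz]] := sep_fun nf.
have w0 : w = 0.
  apply: sp => j Sj; apply: sub_ker Vw.
  by apply: (sumsmx_sup j) => //; rewrite genmxE.
by move: nz; rewrite w0 mulmx0 eqxx.
Qed.

Lemma rank_sum_le (I : finType) (S : {set I}) (f : I -> 'rV[R]_(d + 1)) :
  (\rank (\sum_(i in S) <<f i>>)%MS <= #|S|)%N.
Proof.
rewrite -sum1_card; elim/big_rec2: _ => [|i k A _ IH]; first by rewrite mxrank0.
apply: leq_trans (mxrank_adds_leqif _ _) _; apply: leq_add => //.
by rewrite genmxE rank_leq_row.
Qed.

Lemma hat_neq0 (z : 'rV[R]_d) : hat z != 0.
Proof.
apply/eqP => /matrixP/(_ 0 (rshift d 0)); rewrite /hat row_mxEr !mxE => /eqP.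
by rewrite oner_eq0.
Qed.

End Span.

Section GP.
Variable R : rcfType.
Variables d n m : nat.
Variables (p : 'I_n -> 'rV[R]_d) (q : 'I_m -> 'rV[R]_d).
Variables (P : {set 'I_n}) (Q : {set 'I_m}).
Variables (lam : 'I_n -> R) (mu : 'I_m -> R).
Hypothesis lam0 : forall i, 0 <= lam i.
Hypothesis mu0 : forall j, 0 <= mu j.
Hypothesis lamP : forall i, 0 < lam i -> i \in P.
Hypothesis muQ : forall j, 0 < mu j -> j \in Q.
Hypothesis MOMsq : forall w : 'cV[R]_(d + 1),
  \sum_i lam i * ((hat (p i) *m w) 0 0) ^+ 2 = \sum_j mu j * ((hat (q j) *m w) 0 0) ^+ 2.
Hypothesis exP : exists i, 0 < lam i.
Hypothesis exQ : exists j, 0 < mu j.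
Hypothesis GP : general_position (join_cfg p q)
    ([set lshift m i | i in P] :|: [set rshift n j | j in Q]).

Let Sj := [set lshift m i | i in [set i | 0 < lam i]] :|: [set rshift n j | j in [set j | 0 < mu j]].
Let jh s := hat (join_cfg p q s).

Lemma jl i : join_cfg p q (lshift m i) = p i.
Proof. by rewrite /join_cfg -[lshift m i]/(unsplit (inl i)) unsplitK. Qed.
Lemma jr j : join_cfg p q (rshift n j) = q j.
Proof. by rewrite /join_cfg -[rshift n j]/(unsplit (inr j)) unsplitK. Qed.

Lemma Sj_cases s : s \in Sj ->
  (exists2 i, s = lshift m i & 0 < lam i) \/ (exists2 j, s = rshift n j & 0 < mu j).
Proof.
by case/setUP => /imsetP [x]; rewrite inE => lx ->; [left|right]; exists x.
Qed.

Lemma inSl i : (lshift m i \in Sj) = (0 < lam i).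
Proof.
apply/idP/idP => [|li]; last by rewrite inE; apply/orP; left; apply/imsetP; exists i; rewrite ?inE.
case/Sj_cases => [[x /lshift_inj -> //]|[x /eqP]]; by rewrite eq_lrshift.
Qed.

Lemma inSr j : (rshift n j \in Sj) = (0 < mu j).
Proof.
apply/idP/idP => [|li]; last by rewrite inE; apply/orP; right; apply/imsetP; exists j; rewrite ?inE.
case/Sj_cases => [[x /eqP]|[x /rshift_inj -> //]]; by rewrite eq_rlshift.
Qed.

Lemma SjU : Sj \subset [set lshift m i | i in P] :|: [set rshift n j | j in Q].
Proof.
apply/subsetP => s /Sj_cases [[i -> li]|[j -> mj]]; rewrite inE; apply/orP; [left|right];
  apply/imsetP; [exists i => //; exact: lamP | exists j => //; exact: muQ].
Qed.

Lemma gp_rank (S : {set 'I_(n + m)}) k : S \subset Sj -> #|S| = k.+1 -> (1 <= k <= d)%N ->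
  \rank (\sum_(s in S) <<jh s>>)%MS = k.+1.
Proof.
move=> sS cS kd; have := GP kd (subset_trans sS SjU) cS; rewrite /affdim -/jh => H.
move: kd; rewrite -H => /andP [k1 _].
by move: k1; case: (\rank _).
Qed.

Lemma not_small : (#|Sj| <= d + 1)%N -> False.
Proof.
move=> cS.
have [i0 li0] := exP; have [j0 mj0] := exQ.
pose s0 := lshift m i0.
have s0S : s0 \in Sj by rewrite inSl.
have r0S : rshift n j0 \in Sj :\ s0 by rewrite in_setD1 eq_rlshift /= inSr.
have c1 : (0 < #|Sj :\ s0|)%N by apply/card_gt0P; exists (rshift n j0).
have cE : #|Sj| = (#|Sj :\ s0|).+1 by rewrite (cardsD1 s0) s0S.
have rV := gp_rank (subxx _) cE.
have := rV; rewrite -cE => /(_ _) rV'.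
have {rV'} rV : \rank (\sum_(s in Sj) <<jh s>>)%MS = #|Sj|.
  by rewrite rV' // c1 -ltnS -cE -addn1.
have nsub : ~~ (jh s0 <= \sum_(s in Sj :\ s0) <<jh s>>)%MS.
  apply/negP => sub.
  have : (\sum_(s in Sj) <<jh s>> <= \sum_(s in Sj :\ s0) <<jh s>>)%MS.
    apply/sumsmx_subP => s sS; case: (eqVneq s s0) => [->|ns]; first by rewrite genmxE.
    by apply: (sumsmx_sup s); rewrite ?in_setD1 ?ns ?sS // genmxE.
  move/mxrankS; rewrite rV => H.
  have := leq_trans H (rank_sum_le _ _); by rewrite cE ltnn.
have [w [Vw nz]] := sep_fun nsub.
have Z : forall s, s \in Sj :\ s0 -> jh s *m w = 0.
  move=> s sS; apply: sub_ker Vw; by apply: (sumsmx_sup s) => //; rewrite genmxE.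
have := MOMsq w.
rewrite (bigD1 i0) //= big1 => [|i ni0]; last first.
  have := lam0 i; rewrite le_eqVlt => /orP [/eqP <-|li]; first by rewrite mul0r.
  have := Z (lshift m i); rewrite /jh jl => -> //; first by rewrite mxE expr0n mulr0.
  by rewrite in_setD1 eq_shift ni0 inSl.
rewrite big1 => [|j _]; last first.
  have := mu0 j; rewrite le_eqVlt => /orP [/eqP <-|mj]; first by rewrite mul0r.
  have := Z (rshift n j); rewrite /jh jr => -> //; first by rewrite mxE expr0n mulr0.
  by rewrite in_setD1 eq_rlshift inSr.
rewrite addr0 => /eqP; rewrite mulf_eq0 (gt_eqF li0) /= expf_eq0 /= => /eqP H0.
by move: nz; rewrite /jh /s0 jl; move/eqP; apply; apply: m11P; rewrite H0 mxE.
Qed.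

Lemma both_zero (w : 'cV[R]_(d + 1)) :
  (forall i, 0 < lam i -> hat (p i) *m w = 0) ->
  (forall j, 0 < mu j -> hat (q j) *m w = 0) -> w = 0.
Proof.
move=> HP HQ; apply/eqP; apply/negPn/negP => wnz.
have [i0 li0] := exP.
pose V := (\sum_(s in Sj) <<jh s>>)%MS.
have Vk : (V <= kermx w)%MS.
  apply/sumsmx_subP => s /Sj_cases [[i -> li]|[j -> mj]]; rewrite genmxE;
    apply/sub_kermxP; rewrite /jh ?jl ?jr; [exact: HP | exact: HQ].
have rVd : (\rank V <= d)%N.
  apply: leq_trans (mxrankS Vk) _; rewrite mxrank_ker.
  have : (0 < \rank w)%N by rewrite lt0n mxrank_eq0.
  by case: (\rank w) => // r _; rewrite addn1 subSS leq_subr.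
have rV1 : (1 <= \rank V)%N.
  have : (jh (lshift m i0) <= V)%MS by apply: (sumsmx_sup (lshift m i0)); rewrite ?inSl // genmxE.
  move/mxrankS; apply: leq_trans; by rewrite lt0n mxrank_eq0 hat_neq0.
have d1 : (1 <= d)%N := leq_trans rV1 rVd.
have big : (d + 1 < #|Sj|)%N by rewrite ltnNge; apply/negP => /not_small.
pose S' := [set x in take (d + 1) (enum Sj)].
have cS' : #|S'| = d.+1.
  rewrite cardsE; move/card_uniqP: (take_uniq (d + 1) (enum_uniq (mem Sj))) ->.
  by rewrite size_takel ?addn1 // -cardE (leq_trans _ big) // addn1.
have sS' : S' \subset Sj.
  by apply/subsetP => x; rewrite inE => /mem_take; rewrite mem_enum.
have dd : (1 <= d <= d)%N by rewrite d1 leqnn.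
have rS' := gp_rank sS' cS' dd.
have : (\sum_(s in S') <<jh s>> <= V)%MS.
  apply/sumsmx_subP => s sS; apply: (sumsmx_sup s); last exact: submx_refl.
  exact: (subsetP sS').
move/mxrankS; rewrite rS' => H.
by have := leq_trans H rVd; rewrite ltnn.
Qed.

Lemma MOM_zero_side (w : 'cV[R]_(d + 1)) :
  (forall i, 0 < lam i -> hat (p i) *m w = 0) -> \sum_i lam i * ((hat (p i) *m w) 0 0) ^+ 2 = 0.
Proof.
move=> H; apply: big1 => i _.
have := lam0 i; rewrite le_eqVlt => /orP [/eqP <-|li]; first by rewrite mul0r.
by rewrite H // mxE expr0n mulr0.
Qed.

Lemma spanP : spanning p (fun i => 0 < lam i).
Proof.
move=> w HP; apply: both_zero => // j mj.
have := MOMsq w; rewrite MOM_zero_side // => /esym Z.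
have := sum_nonneg_eq0 mu0 (b := fun j => ((hat (q j) *m w) 0 0) ^+ 2) _ Z mj.
move=> /(_ (fun j => sqr_ge0 _)) /eqP; rewrite expf_eq0 /= => /eqP H0.
by apply: m11P; rewrite H0 mxE.
Qed.

Lemma spanQ : spanning q (fun j => 0 < mu j).
Proof.
move=> w HQ; apply: both_zero => // i li.
have := MOMsq w.
have -> : \sum_j mu j * ((hat (q j) *m w) 0 0) ^+ 2 = 0.
  apply: big1 => j _.
  have := mu0 j; rewrite le_eqVlt => /orP [/eqP <-|mj]; first by rewrite mul0r.
  by rewrite HQ // mxE expr0n mulr0.
move=> Z.
have := sum_nonneg_eq0 lam0 (b := fun i => ((hat (p i) *m w) 0 0) ^+ 2) _ Z li.
move=> /(_ (fun j => sqr_ge0 _)) /eqP; rewrite expf_eq0 /= => /eqP H0.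
by apply: m11P; rewrite H0 mxE.
Qed.

End GP.

Section GordanApp.
Variable R : rcfType.
Variables d n m : nat.
Variables (p : 'I_n -> 'rV[R]_d) (q : 'I_m -> 'rV[R]_d).
Variables (P : {set 'I_n}) (Q : {set 'I_m}).

Let J0 : finType := ('I_(d + 1) * 'I_(d + 1))%type.

Lemma quad_pair (u : 'rV[R]_(d + 1)) (A : 'M[R]_(d + 1)) :
  (u *m A *m u^T) 0 0 = \sum_(pr : J0) u 0 pr.1 * u 0 pr.2 * A pr.1 pr.2.
Proof.
rewrite sum_pair /= mxE exchange_big /=; apply: eq_bigr => r _.
rewrite mxE mulr_suml; apply: eq_bigr => s _; rewrite !mxE; ring.
Qed.

Lemma sum_enum (J : finType) (F : J -> R) : \sum_p F p = \sum_(k < #|J|) F (enum_val k).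
Proof. by rewrite -big_enum_val. Qed.

Lemma quad_enum (u : 'rV[R]_(d + 1)) (A : 'M[R]_(d + 1)) :
  (u *m A *m u^T) 0 0 = \sum_(k < #|J0|)
     u 0 (enum_val k).1 * u 0 (enum_val k).2 * A (enum_val k).1 (enum_val k).2.
Proof. rewrite quad_pair; exact: (sum_enum (fun pr : J0 => u 0 pr.1 * u 0 pr.2 * A pr.1 pr.2)). Qed.

Lemma quad_delta (u : 'rV[R]_(d + 1)) a b :
  (u *m delta_mx a b *m u^T) 0 0 = u 0 a * u 0 b.
Proof.
rewrite quad_pair (bigD1 (a, b)) //= big1 => [|[r s] /= ne].
  by rewrite mxE !eqxx mulr1 addr0.
rewrite mxE; case: (eqVneq r a) => [ra|]; last by rewrite mulr0.
case: (eqVneq s b) => [sb|]; last by rewrite andbF mulr0.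
by move: ne; rewrite ra sb eqxx.
Qed.

Lemma quad_ww (u : 'rV[R]_(d + 1)) (w : 'cV[R]_(d + 1)) :
  (u *m (w *m w^T) *m u^T) 0 0 = ((u *m w) 0 0) ^+ 2.
Proof.
rewrite mulmxA -mulmxA -trmx_mul [LHS]mxE big_ord1 [(_^T) _ _]mxE expr2.
by rewrite (ord1 ord0).
Qed.

Lemma quad_sym (u : 'rV[R]_(d + 1)) (A : 'M[R]_(d + 1)) :
  (u *m (A + A^T) *m u^T) 0 0 = 2 * (u *m A *m u^T) 0 0.
Proof.
rewrite mulmxDr mulmxDl eD.
have -> : (u *m A^T *m u^T) 0 0 = (u *m A *m u^T) 0 0.
  have -> : (u *m A^T *m u^T) 0 0 = ((u *m A^T *m u^T)^T) 0 0 by rewrite [RHS]mxE.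
  by rewrite !trmx_mul !trmxK mulmxA.
ring.
Qed.

Lemma gordan_app : ~ strictly_separated_by_quadric p P q Q ->
  exists lam : 'I_n -> R, exists mu : 'I_m -> R,
  [/\ (forall i, 0 <= lam i) /\ (forall j, 0 <= mu j),
      (forall i, 0 < lam i -> i \in P), (forall j, 0 < mu j -> j \in Q),
      ((exists i, lam i != 0) \/ (exists j, mu j != 0)) &
      forall A : 'M[R]_(d + 1),
        \sum_i lam i * (hat (p i) *m A *m (hat (p i))^T) 0 0 =
        \sum_j mu j * (hat (q j) *m A *m (hat (q j))^T) 0 0].
Proof.
move=> nsep.
pose S : pred ('I_n + 'I_m) := fun z => match z with inl i => i \in P | inr j => j \in Q end.
pose hh (u : 'rV[R]_(d + 1)) (k : 'I_#|J0|) := u 0 (enum_val k).1 * u 0 (enum_val k).2.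
pose v z k := match z with inl i => hh (hat (p i)) k | inr j => - hh (hat (q j)) k end.
case: (gordan S v) => [[x Hx]|[lam' [l0 lS [z nz] leq]]].
  exfalso; apply: nsep.
  pose A0 : 'M[R]_(d + 1) := \matrix_(r, s) x (enum_rank (r, s)).
  have QA : forall u, (u *m A0 *m u^T) 0 0 = \sum_k hh u k * x k.
    move=> u; rewrite quad_enum; apply: eq_bigr => k _.
    by rewrite mxE -surjective_pairing enum_valK.
  exists (A0 + A0^T); split; [|split].
  - by rewrite linearD /= trmxK addrC.
  - move=> j Qj; rewrite quad_sym QA.
    have := Hx (inr j) Qj; rewrite /=.
    under eq_bigr => k _ do rewrite mulNr.
    rewrite sumrN oppr_gt0 => H; rewrite pmulr_rlt0 //.
  - move=> i Pi; rewrite quad_sym QA; have := Hx (inl i) Pi; rewrite /= => H.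
    by rewrite mulr_gt0.
exists (fun i => lam' (inl i)), (fun j => lam' (inr j)); split.
- by split => ?; apply: l0.
- move=> i li; apply/negPn/negP => nP.
  by move: li; rewrite (lS (inl i)) ?ltxx.
- move=> j li; apply/negPn/negP => nQ.
  by move: li; rewrite (lS (inr j)) ?ltxx.
- by case: z nz => [i|j] nz; [left; exists i|right; exists j].
move=> A.
have E : forall k, \sum_i lam' (inl i) * hh (hat (p i)) k = \sum_j lam' (inr j) * hh (hat (q j)) k.
  move=> k; have := leq k; rewrite big_sumType /=.
  under [X in _ + X = _ -> _]eq_bigr => j _ do rewrite mulrN.
  by rewrite sumrN => /eqP; rewrite subr_eq0 => /eqP.
have T : forall (I : finType) (c : I -> R) (u : I -> 'rV[R]_(d + 1)),
    \sum_i c i * (u i *m A *m (u i)^T) 0 0 =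
    \sum_k (\sum_i c i * hh (u i) k) * A (enum_val k).1 (enum_val k).2.
  move=> I c u; under eq_bigr => i _ do rewrite quad_enum mulr_sumr.
  rewrite exchange_big /=; apply: eq_bigr => k _; rewrite mulr_suml.
  by apply: eq_bigr => i _; rewrite /hh mulrA.
rewrite !T; apply: eq_bigr => k _; by rewrite E.
Qed.

End GordanApp.

Section Unit.
Variable R : rcfType.
Variables d n : nat.
Variables (p : 'I_n -> 'rV[R]_d) (lam : 'I_n -> R).
Hypothesis lam0 : forall i, 0 <= lam i.
Hypothesis sp : spanning p (fun i => 0 < lam i).

Lemma M_unit : \sum_i lam i *: ((hat (p i))^T *m hat (p i)) \in unitmx.
Proof.
rewrite -row_free_unit; apply: inj_row_free => v Hv.
have E : (v *m (\sum_i lam i *: ((hat (p i))^T *m hat (p i))) *m v^T) 0 0 =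
    \sum_i lam i * ((hat (p i) *m v^T) 0 0) ^+ 2.
  rewrite mulmx_sumr mulmx_suml summxE; apply: eq_bigr => i _.
  rewrite -scalemxAr -scalemxAl eZ; congr (_ * _).
  have -> : v *m ((hat (p i))^T *m hat (p i)) *m v^T = (hat (p i) *m v^T)^T *m (hat (p i) *m v^T) by rewrite trmx_mul trmxK !mulmxA.
  by rewrite [LHS]mxE big_ord1 [(_^T) _ _]mxE expr2 (ord1 ord0).
move: E; rewrite Hv mul0mx [LHS]mxE => /esym Z.
suff : v^T = 0 by move/eqP; rewrite trmx_eq0 => /eqP.
apply: sp => i li; apply: m11P.
have := sum_nonneg_eq0 lam0 (b := fun i => ((hat (p i) *m v^T) 0 0) ^+ 2) _ Z li.
move=> /(_ (fun j => sqr_ge0 _)) /eqP; rewrite expf_eq0 /= => /eqP ->.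
by rewrite mxE.
Qed.

Lemma span_aff : affine_span_full p.
Proof.
rewrite /affine_span_full.
have H := span_full (a := fun i => hat (p i)) sp.
have ub := rank_leq_col (\sum_(i < n) <<hat (p i)>>)%MS.
have lb : (d + 1 <= \rank (\sum_(i < n) <<hat (p i)>>)%MS)%N.
  rewrite -[X in (X <= _)%N]H; apply: mxrankS.
  apply/sumsmx_subP => i _; apply: (sumsmx_sup i) => //; exact: submx_refl.
apply: anti_leq; rewrite (leq_trans ub (eq_leq (addn1 d))) (leq_trans (eq_leq (esym (addn1 d))) lb) //.
Qed.

End Unit.

Lemma pos_ex (R : rcfType) (I : finType) (a : I -> R) :
  (forall i, 0 <= a i) -> 0 < \sum_i a i -> exists i, 0 < a i.
Proof.
move=> a0 s; case: (pickP (fun i => 0 < a i)) => [i ai|H]; first by exists i.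
move: s; rewrite big1 ?ltxx // => i _; have := a0 i.
by rewrite le_eqVlt H orbF => /eqP <-.
Qed.

Lemma sum_pos (R : rcfType) (I : finType) (a : I -> R) i0 :
  (forall i, 0 <= a i) -> a i0 != 0 -> 0 < \sum_i a i.
Proof.
move=> a0 nz; rewrite (bigD1 i0) //= ltr_wpDr ?sumr_ge0 //.
by rewrite lt_def nz a0.
Qed.

Lemma uTu (R : rcfType) k (u : 'rV[R]_k) r s : (u^T *m u) r s = u 0 r * u 0 s.
Proof. by rewrite mxE big_ord1 !mxE. Qed.


Theorem mainTheorem5 (R : rcfType) (d n m : nat)
  (p : 'I_n -> 'rV[R]_d) (q : 'I_m -> 'rV[R]_d)
  (P : {set 'I_n}) (Q : {set 'I_m}) :
  general_position (join_cfg p q)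
    ([set lshift m i | i in P] :|: [set rshift n j | j in Q]) ->
  ~ strictly_separated_by_quadric p P q Q ->
  univ_rigid_Knm p q /\ affine_span_full p /\ affine_span_full q.
Proof.
move=> GP nsep.
have [lam [mu [[l0 m0] lP mQ nz MOM]]] := gordan_app nsep.
have MOMsq : forall w : 'cV[R]_(d + 1),
    \sum_i lam i * ((hat (p i) *m w) 0 0) ^+ 2 = \sum_j mu j * ((hat (q j) *m w) 0 0) ^+ 2.
  move=> w; have := MOM (w *m w^T).
  rewrite (eq_bigr (fun i => lam i * ((hat (p i) *m w) 0 0) ^+ 2)); last by move=> i _; rewrite quad_ww.
  by rewrite [RHS](eq_bigr (fun j => mu j * ((hat (q j) *m w) 0 0) ^+ 2)) // => j _; rewrite quad_ww.
pose last : 'I_(d + 1) := rshift d 0.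
have hl : forall x : 'rV[R]_d, hat x 0 last = 1 by move=> x; rewrite /hat row_mxEr mxE.
have mass : \sum_i lam i = \sum_j mu j.
  have := MOM (delta_mx last last).
  rewrite (eq_bigr (fun i => lam i)); last by move=> i _; rewrite quad_delta !hl !mulr1.
  by rewrite [RHS](eq_bigr (fun j => mu j)) // => j _; rewrite quad_delta !hl !mulr1.
have spos : 0 < \sum_i lam i.
  case: nz => [[i li]|[j mj]]; first exact: (sum_pos l0 li).
  by rewrite mass; exact: (sum_pos m0 mj).
have exP := pos_ex l0 spos.
have exQ : exists j, 0 < mu j by apply: (pos_ex m0); rewrite -mass.
have spP := spanP l0 m0 lP mQ MOMsq exP exQ GP.
have spQ := spanQ l0 m0 lP mQ MOMsq exP exQ GP.
have Mq : \sum_i lam i *: ((hat (p i))^T *m hat (p i)) =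
    \sum_j mu j *: ((hat (q j))^T *m hat (q j)).
  apply/matrixP => r s; rewrite !summxE; have := MOM (delta_mx r s).
  rewrite (eq_bigr (fun i => (lam i *: ((hat (p i))^T *m hat (p i))) r s)); last first.
    by move=> i _; rewrite quad_delta eZ uTu.
  by rewrite [RHS](eq_bigr (fun j => (mu j *: ((hat (q j))^T *m hat (q j))) r s)) // => j _;
    rewrite quad_delta eZ uTu.
have Mu := M_unit l0 spP.
split; first exact: (ur_final l0 m0 Mq Mu spP spQ exQ).
by split; [exact: (span_aff spP) | exact: (span_aff spQ)].
Qed.
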